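(* Let $I\unlhd K[x_1,\dots,x_n]$ be a homogeneous ideal and let $w\in\mathbb R^n$. Then the map $\{-1\}\times\mathbb R^n\to\mathbb R^n$, $(-1,v)\mapsto v$, maps $C_{(-1,w)}(\pi^{-1}I)\cap(\{-1\}\times\mathbb R^n)$ into the Gröbner polytope $C_{\nu,w}(I)$.
   Context: Let $K$ be a complete field with a non-trivial discrete valuation $\nu$ (normalized with $\nu(p)=1$) and a uniformizing parameter $p$. Let $\mathcal O_K$ be its ring of integers and $\mathfrak K$ its residue field. Let $R\subseteq\mathcal O_K$ be a dense noetherian subring with $p\in R$. The map $\pi:R[[t]][x]\to\mathcal O_K[x]\subseteq K[x]$ sends $t\mapsto p$, and $\pi^{-1}I$ denotes the preimage. For $f=\sum_\alpha c_\alpha x^\alpha\in K[x]$, $\operatorname{in}_{\nu,w}(f)=\sum\overline{c_\alpha p^{-\nu(c_\alpha)}}x^\alpha\in\mathfrak K[x]$, summed over the $\alpha$ with $c_\alpha\ne0$ and $w\cdot\alpha-\nu(c_\alpha)$ maximal. $\operatorname{in}_{\nu,w}(I)$ is the ideal generated by these initial forms. For a homogeneous $I$, the Gröbner polytope is $C_{\nu,w}(I)=\overline{\{v\in\mathbb R^n:\operatorname{in}_{\nu,v}(I)=\operatorname{in}_{\nu,w}(I)\}}$ (Euclidean closure). For $f=\sum c_{\alpha,\beta}t^\beta x^\alpha\in R[[t]][x]$ and $u\in\mathbb R_{<0}\times\mathbb R^n$, $\operatorname{in}_u(f)$ is the sum of the terms with $u\cdot(\beta,\alpha)$ maximal. $\operatorname{in}_u(J)\unlhd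 R[t,x]$ is generated by these initial forms. For an $x$-homogeneous ideal $J\unlhd R[[t]][x]$ (generated by elements that are homogeneous as polynomials in $x$ with coefficients in $R[[t]]$), the Gröbner cone is $C_u(J)=\overline{\{v\in\mathbb R_{<0}\times\mathbb R^n:\operatorname{in}_v(J)=\operatorname{in}_u(J)\}}$. *)

(* Defs.v *)
From HB Require Import structures.
From mathcomp Require Import all_boot all_order all_algebra.
From mathcomp Require Import reals.
From mathcomp Require Import mpoly.

Set Implicit Arguments.
Unset Strict Implicit.
Unset Printing Implicit Defensive.

Import Order.TTheory GRing.Theory Num.Theory.
Local Open Scope ring_scope.

Definition is_ideal (P : comPzRingType) (I : P -> Prop) : Prop :=
  I 0 /\ (forall a b, I a -> I b -> I (a + b)) /\ (forall c a, I a -> I (c * a)).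

(* Ideal generated by S inside the subring A of P (A = coefficient ring
   of the ambient ring): finite A-combinations of elements of S. *)
Definition ideal_gen (P : comPzRingType) (A S : P -> Prop) (g : P) : Prop :=
  exists (N : nat) (h s : nat -> P),
    (forall i, (i < N)%N -> A (h i) /\ S (s i)) /\ g = \sum_(i < N) h i * s i.

Definition same_ideal (P : Type) (I J : P -> Prop) : Prop := forall g, I g <-> J g.

(* Euclidean closure in R^d (R^d with its product = Euclidean topology). *)
Definition in_closure (R : realType) (d : nat) (S : ('I_d -> R) -> Prop)
  (v : 'I_d -> R) : Prop :=
  forall e : R, 0 < e -> exists s, S s /\ forall i, `|s i - v i| < e.

(* The valued field K.  nu is only meaningful on nonzero elements;     *)
(* vge nu x N means nu(x) >= N with the convention nu(0) = +oo.        *)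

Definition vge (K : fieldType) (nu : K -> int) (x : K) (N : int) : Prop :=
  x = 0 \/ N <= nu x.

Definition in_OK (K : fieldType) (nu : K -> int) (x : K) : Prop := vge nu x 0.

Definition is_discrete_valuation (K : fieldType) (nu : K -> int) : Prop :=
  (forall x y, x != 0 -> y != 0 -> nu (x * y) = nu x + nu y) /\
  (forall x y, x != 0 -> y != 0 -> x + y != 0 ->
     Num.min (nu x) (nu y) <= nu (x + y)).

Definition val_complete (K : fieldType) (nu : K -> int) : Prop :=
  forall a : nat -> K,
    (forall N : int, exists M, forall m l, (M <= m)%N -> (M <= l)%N ->
        vge nu (a m - a l) N) ->
    exists L, forall N : int, exists M, forall m, (M <= m)%N -> vge nu (a m - L) N.

Definition is_residue_map (K k : fieldType) (nu : K -> int) (res : K -> k) : Prop :=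
  (forall x y, in_OK nu x -> in_OK nu y -> res (x + y) = res x + res y) /\
  (forall x y, in_OK nu x -> in_OK nu y -> res (x * y) = res x * res y) /\
  res 1 = 1 /\
  (forall a : k, exists x, in_OK nu x /\ res x = a) /\
  (forall x, in_OK nu x -> (res x = 0 <-> vge nu x 1)).

Definition is_subring (K : fieldType) (Rs : K -> Prop) : Prop :=
  Rs 0 /\ Rs 1 /\ (forall x y, Rs x -> Rs y -> Rs (x - y)) /\
  (forall x y, Rs x -> Rs y -> Rs (x * y)).

Definition is_noetherian (K : fieldType) (Rs : K -> Prop) : Prop :=
  forall J : K -> Prop,
    (forall x, J x -> Rs x) -> J 0 ->
    (forall x y, J x -> J y -> J (x + y)) ->
    (forall r x, Rs r -> J x -> J (r * x)) ->
    exists (N : nat) (s : nat -> K), (forall i, (i < N)%N -> J (s i)) /\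
      forall x, J x -> exists c : nat -> K, (forall i, Rs (c i)) /\
        x = \sum_(i < N) c i * s i.

Definition is_dense_in_OK (K : fieldType) (nu : K -> int) (Rs : K -> Prop) : Prop :=
  forall x, in_OK nu x -> forall N : int, exists r, Rs r /\ vge nu (x - r) N.

Definition wdot (R : realType) (n : nat) (w : 'I_n -> R) (m : 'X_{1..n}) : R :=
  \sum_(i < n) w i * (m i)%:R.

Definition is_homog (K : fieldType) (n : nat) (f : {mpoly K[n]}) : Prop :=
  forall m m', m \in msupp f -> m' \in msupp f -> mdeg m = mdeg m'.

Definition is_homog_ideal (K : fieldType) (n : nat) (I : {mpoly K[n]} -> Prop) : Prop :=
  is_ideal I /\
  exists S : {mpoly K[n]} -> Prop, (forall f, S f -> is_homog f) /\
    same_ideal I (ideal_gen (fun _ => True) S).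

Definition in_nu (K k : fieldType) (R : realType) (n : nat) (nu : K -> int)
  (res : K -> k) (p : K) (w : 'I_n -> R) (f : {mpoly K[n]}) : {mpoly k[n]} :=
  \sum_(m <- msupp f |
          all (fun m' => wdot w m' - (nu f@_m')%:~R <= wdot w m - (nu f@_m)%:~R)
              (msupp f))
     res (f@_m * p ^ (- nu f@_m)) *: 'X_[m].

Definition in_nu_ideal (K k : fieldType) (R : realType) (n : nat) (nu : K -> int)
  (res : K -> k) (p : K) (w : 'I_n -> R) (I : {mpoly K[n]} -> Prop) :
  {mpoly k[n]} -> Prop :=
  ideal_gen (fun _ => True) (fun h => exists f, I f /\ h = in_nu nu res p w f).

Definition groebner_polytope (K k : fieldType) (R : realType) (n : nat)
  (nu : K -> int) (res : K -> k) (p : K) (I : {mpoly K[n]} -> Prop)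
  (w : 'I_n -> R) : ('I_n -> R) -> Prop :=
  in_closure (fun v => same_ideal (in_nu_ideal nu res p v I) (in_nu_ideal nu res p w I)).

(* R[[t]][x].  An element is encoded by its coefficient function       *)
(* F alpha beta = coefficient of t^beta x^alpha (values in K).         *)

Definition pstx (K : fieldType) (n : nat) := 'X_{1..n} -> nat -> K.

Definition in_RtX (K : fieldType) (n : nat) (Rs : K -> Prop) (F : pstx K n) : Prop :=
  (forall a b, Rs (F a b)) /\
  exists s : seq 'X_{1..n}, forall a, a \notin s -> forall b, F a b = 0.

(* pi F = g : each coefficient of g is sum_beta F alpha beta p^beta
   (convergent series in the valuation topology). *)
Definition pi_rel (K : fieldType) (n : nat) (nu : K -> int) (p : K)
  (F : pstx K n) (g : {mpoly K[n]}) : Prop :=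
  forall a, forall N : int, exists M, forall m, (M <= m)%N ->
    vge nu (g@_a - \sum_(b < m) F a b * p ^+ b) N.

Definition pi_preimage (K : fieldType) (n : nat) (nu : K -> int) (Rs : K -> Prop)
  (p : K) (I : {mpoly K[n]} -> Prop) (F : pstx K n) : Prop :=
  in_RtX Rs F /\ exists g, pi_rel nu p F g /\ I g.

(* R[t,x] is encoded inside K[t,x] = {mpoly K[n.+1]}: variable 0 is t,
   variable (lift ord0 i) is x_i; coefficients lie in Rs. *)
Definition coeffs_in (K : fieldType) (n : nat) (Rs : K -> Prop)
  (h : {mpoly K[n.+1]}) : Prop := forall m, Rs h@_m.

Definition x_part (n : nat) (m : 'X_{1..n.+1}) : 'X_{1..n} :=
  [multinom m (lift ord0 i) | i < n].

Definition wt (R : realType) (n : nat) (u : 'I_n.+1 -> R) (b : nat) (a : 'X_{1..n}) : R :=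
  u ord0 * b%:R + \sum_(i < n) u (lift ord0 i) * (a i)%:R.

Definition init_term (K : fieldType) (R : realType) (n : nat) (u : 'I_n.+1 -> R)
  (F : pstx K n) (m : 'X_{1..n.+1}) : Prop :=
  F (x_part m) (m ord0) != 0 /\
  forall a b, F a b != 0 -> wt u b a <= wt u (m ord0) (x_part m).

Definition is_init_u (K : fieldType) (R : realType) (n : nat) (u : 'I_n.+1 -> R)
  (F : pstx K n) (g : {mpoly K[n.+1]}) : Prop :=
  forall m, (init_term u F m -> g@_m = F (x_part m) (m ord0)) /\
            (~ init_term u F m -> g@_m = 0).

Definition in_u_ideal (K : fieldType) (R : realType) (n : nat) (Rs : K -> Prop)
  (u : 'I_n.+1 -> R) (J : pstx K n -> Prop) : {mpoly K[n.+1]} -> Prop :=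
  ideal_gen (coeffs_in Rs) (fun g => exists F, J F /\ is_init_u u F g).

Definition groebner_cone (K : fieldType) (R : realType) (n : nat) (Rs : K -> Prop)
  (J : pstx K n -> Prop) (u : 'I_n.+1 -> R) : ('I_n.+1 -> R) -> Prop :=
  in_closure (fun v => v ord0 < 0 /\ same_ideal (in_u_ideal Rs v J) (in_u_ideal Rs u J)).

Definition ext_vec (R : realType) (n : nat) (c : R) (v : 'I_n -> R) : 'I_n.+1 -> R :=
  fun i => if unlift ord0 i is Some j then v j else c.

(* Main.v *)
Require Import Defs.
Set Warnings "-notation-overridden,-ambiguous-paths,-notation-incompatible-prefix,-deprecated".
From HB Require Import structures.
From mathcomp Require Import all_boot all_order all_algebra.
From mathcomp Require Import reals.
From mathcomp Require Import mpoly.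
From Stdlib Require Import ClassicalEpsilon.
From mathcomp Require Import ring lra.
Import Order.TTheory GRing.Theory Num.Theory.
Local Open Scope ring_scope.
Set Implicit Arguments.
Unset Strict Implicit.
Unset Printing Implicit Defensive.
Section Main.
Variables (K k : fieldType) (R : realType) (n : nat).
Variables (nu : K -> int) (p : K) (res : K -> k) (Rs : K -> Prop).
Hypothesis Hnu : is_discrete_valuation nu.
Hypothesis Hp0 : p != 0.
Hypothesis Hp : nu p = 1.
Hypothesis Hres : is_residue_map nu res.
Hypothesis HRsub : is_subring Rs.
Hypothesis HRO : forall x, Rs x -> in_OK nu x.
Hypothesis HRdense : is_dense_in_OK nu Rs.


Lemma nuM x y : x != 0 -> y != 0 -> nu (x * y) = nu x + nu y.
Proof. exact: (proj1 Hnu). Qed.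

Lemma nu1 : nu 1 = 0.
Proof.
have := nuM (oner_neq0 K) (oner_neq0 K); rewrite mulr1 => h.
have : nu 1 + nu 1 - nu 1 = nu 1 - nu 1 by rewrite -h.
by rewrite addrK subrr.
Qed.


Lemma nuV x : x != 0 -> nu x^-1 = - nu x.
Proof.
move=> x0; have := nuM x0 (invr_neq0 x0); rewrite divff // nu1 => h.
by apply: (@addrI _ (nu x)); rewrite -h subrr.
Qed.

Lemma nuN1 : nu (-1) = 0.
Proof.
have h1 : (-1 : K) != 0 by rewrite oppr_eq0 oner_neq0.
have := nuM h1 h1; rewrite mulrNN mulr1 nu1 => h.
have : (2 * nu (-1) = 0)%R by rewrite mulr2n mulrDl mul1r -h.
by move/eqP; rewrite mulf_eq0 /= => /eqP.
Qed.

Lemma nuN x : nu (- x) = nu x.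
Proof.
have [->|x0] := eqVneq x 0; first by rewrite oppr0.
have h1 : (-1 : K) != 0 by rewrite oppr_eq0 oner_neq0.
by rewrite -mulN1r nuM // nuN1 add0r.
Qed.

Lemma nuXn (j : nat) : nu (p ^+ j) = j%:Z.
Proof.
elim: j => [|j IH]; first by rewrite expr0 nu1.
by rewrite exprS nuM ?expf_neq0 // IH Hp -addn1 PoszD addrC.
Qed.

Lemma unitp : p \is a GRing.unit.
Proof. by rewrite unitfE. Qed.

Lemma pz_neq0 (z : int) : p ^ z != 0.
Proof. by case: z => j; rewrite ?NegzE -?invr_expz ?invr_eq0 -exprnP expf_neq0. Qed.

Lemma nuXz (z : int) : nu (p ^ z) = z.
Proof.
case: z => j; first by rewrite -exprnP nuXn.
by rewrite NegzE -invr_expz nuV -?exprnP ?nuXn ?expf_neq0.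
Qed.

Lemma vge0 N : vge nu 0 N. Proof. by left. Qed.

Lemma vge_le x N M : vge nu x N -> M <= N -> vge nu x M.
Proof. by case=> [->|h] hMN; [left|right; apply: le_trans h]. Qed.

Lemma vgeN x N : vge nu x N -> vge nu (- x) N.
Proof. by case=> [->|h]; [left; rewrite oppr0|right; rewrite nuN]. Qed.

Lemma vgeD x y N : vge nu x N -> vge nu y N -> vge nu (x + y) N.
Proof.
case=> [->|hx]; first by rewrite add0r.
case=> [->|hy]; first by rewrite addr0; right.
have [->|x0] := eqVneq x 0; first by rewrite add0r; right.
have [->|y0] := eqVneq y 0; first by rewrite addr0; right.
have [->|s0] := eqVneq (x + y) 0; first by left.
right; apply: le_trans (proj2 Hnu _ _ x0 y0 s0).
by rewrite le_min hx hy.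
Qed.

Lemma vgeB x y N : vge nu x N -> vge nu y N -> vge nu (x - y) N.
Proof. by move=> hx hy; apply: vgeD => //; apply: vgeN. Qed.

Lemma vge_sum (I : Type) (r : seq I) (P : pred I) (F : I -> K) N :
  (forall i, P i -> vge nu (F i) N) -> vge nu (\sum_(i <- r | P i) F i) N.
Proof.
move=> h; elim/big_rec: _ => [|i x Pi hx]; first exact: vge0.
exact: vgeD (h _ Pi) hx.
Qed.

Lemma vgeM x y N M : vge nu x N -> vge nu y M -> vge nu (x * y) (N + M).
Proof.
case=> [->|hx]; first by rewrite mul0r; left.
case=> [->|hy]; first by rewrite mulr0; left.
have [->|x0] := eqVneq x 0; first by rewrite mul0r; left.
have [->|y0] := eqVneq y 0; first by rewrite mulr0; left.
by right; rewrite nuM // lerD.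
Qed.

Lemma vge_pz (z : int) : vge nu (p ^ z) z.
Proof. by right; rewrite nuXz. Qed.

Lemma vgeMpz x N (z : int) : vge nu x N -> vge nu (x * p ^ z) (N + z).
Proof. by move=> h; apply: vgeM h (vge_pz z). Qed.

Lemma vgeMpz_inv x N (z : int) : vge nu (x * p ^ z) N -> vge nu x (N - z).
Proof.
move=> h; have := vgeMpz (- z) h.
by rewrite -mulrA -exprzDr ?unitp // subrr expr0z mulr1.
Qed.

Lemma vge_all0 x : (forall N, vge nu x N) -> x = 0.
Proof.
move=> h; have [] := h (nu x + 1) => // hl.
by move: hl; rewrite gerDl.
Qed.

Lemma vge_exact x : x != 0 -> vge nu x (nu x).
Proof. by right. Qed.

Lemma vge_nu x N : x != 0 -> vge nu x N -> N <= nu x.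
Proof. by move=> /negbTE x0 [/eqP|//]; rewrite x0. Qed.


Lemma OK0 : in_OK nu 0. Proof. exact: vge0. Qed.
Lemma OK1 : in_OK nu 1. Proof. by right; rewrite nu1. Qed.
Lemma OKD x y : in_OK nu x -> in_OK nu y -> in_OK nu (x + y).
Proof. exact: vgeD. Qed.
Lemma OKN x : in_OK nu x -> in_OK nu (- x).
Proof. exact: vgeN. Qed.
Lemma OKB x y : in_OK nu x -> in_OK nu y -> in_OK nu (x - y).
Proof. exact: vgeB. Qed.
Lemma OKM x y : in_OK nu x -> in_OK nu y -> in_OK nu (x * y).
Proof. by move=> hx hy; have := vgeM hx hy; rewrite addr0. Qed.
Lemma OK_sum (I : Type) (r : seq I) (P : pred I) (F : I -> K) :
  (forall i, P i -> in_OK nu (F i)) -> in_OK nu (\sum_(i <- r | P i) F i).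
Proof. exact: vge_sum. Qed.

Lemma resD x y : in_OK nu x -> in_OK nu y -> res (x + y) = res x + res y.
Proof. exact: (proj1 Hres). Qed.
Lemma resM x y : in_OK nu x -> in_OK nu y -> res (x * y) = res x * res y.
Proof. exact: (proj1 (proj2 Hres)). Qed.
Lemma res1 : res 1 = 1.
Proof. exact: (proj1 (proj2 (proj2 Hres))). Qed.
Lemma res_surj a : exists x, in_OK nu x /\ res x = a.
Proof. exact: (proj1 (proj2 (proj2 (proj2 Hres)))). Qed.
Lemma res_ker x : in_OK nu x -> (res x = 0 <-> vge nu x 1).
Proof. exact: (proj2 (proj2 (proj2 (proj2 Hres)))). Qed.

Lemma res0 : res 0 = 0.
Proof.
have := resD OK0 OK0; rewrite addr0 => h.
by apply: (@addrI _ (res 0)); rewrite -h addr0.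
Qed.

Lemma resN x : in_OK nu x -> res (- x) = - res x.
Proof.
move=> hx; have := resD hx (OKN hx); rewrite subrr res0 => h.
by apply: (@addrI _ (res x)); rewrite -h subrr.
Qed.

Lemma resB x y : in_OK nu x -> in_OK nu y -> res (x - y) = res x - res y.
Proof. by move=> hx hy; rewrite resD ?resN //; apply: OKN. Qed.

Lemma res_sum (I : Type) (r : seq I) (P : pred I) (F : I -> K) :
  (forall i, P i -> in_OK nu (F i)) ->
  res (\sum_(i <- r | P i) F i) = \sum_(i <- r | P i) res (F i).
Proof.
move=> h; elim: r => [|i r IH]; first by rewrite !big_nil res0.
rewrite !big_cons; case: ifP => Pi //.
by rewrite resD ?IH //; [exact: h|exact: OK_sum].
Qed.

Lemma res_eq x y : in_OK nu x -> in_OK nu y -> vge nu (x - y) 1 -> res x = res y.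
Proof.
move=> hx hy hxy; have := (res_ker (OKB hx hy)).2 hxy.
by rewrite resB // => /eqP; rewrite subr_eq0 => /eqP.
Qed.

Lemma res_unit x : in_OK nu x -> res x != 0 -> x != 0 /\ nu x = 0.
Proof.
move=> hx hr; have x0 : x != 0.
  by apply/eqP => x0; move: hr; rewrite x0 res0 eqxx.
split=> //; case: (hx) => [/eqP|h0]; first by rewrite (negbTE x0).
have : ~ vge nu x 1 by move=> /(res_ker hx) /eqP; rewrite (negbTE hr).
move=> h1.
apply/eqP; rewrite eq_le h0 andbT; rewrite leNgt; apply/negP => lt.
by apply: h1; right; rewrite -gtz0_ge1.
Qed.


Definition pickr (x : K) : K :=
  if excluded_middle_informative (vge nu x 1) then 0
  else epsilon (inhabits 0) (fun r => Rs r /\ vge nu (x - r) 1).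

Definition dstep (x : K) : K := (x - pickr x) / p.
Definition dstate (a : K) (m : nat) : K := iter m dstep a.
Definition digit (a : K) (m : nat) : K := pickr (dstate a m).

Lemma Rs0 : Rs 0. Proof. by case: HRsub. Qed.

Lemma pickr_spec x : in_OK nu x ->
  [/\ Rs (pickr x), vge nu (x - pickr x) 1 & (pickr x = 0 \/ res (pickr x) != 0)].
Proof.
move=> hx; rewrite /pickr; case: excluded_middle_informative => h.
  by split; [exact: Rs0| rewrite subr0 | left].
have ex : exists r, Rs r /\ vge nu (x - r) 1 by apply: HRdense.
have [hR hv] := epsilon_spec (inhabits 0) _ ex.
split=> //; right; apply/negP => /eqP r0.
apply: (h); have hO := HRO hR.
have := vgeD hv ((res_ker hO).1 r0).
by rewrite subrK.
Qed.

Lemma dstep_OK x : in_OK nu x -> in_OK nu (dstep x).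
Proof.
move=> hx; have [_ hv _] := pickr_spec hx.
have hi : vge nu p^-1 (-1) by right; rewrite nuV // Hp.
by have := vgeM hv hi; rewrite subrr.
Qed.

Lemma dstate_OK a m : in_OK nu a -> in_OK nu (dstate a m).
Proof. by move=> ha; elim: m => [|m IH] //=; apply: dstep_OK. Qed.

Lemma digit_Rs a m : in_OK nu a -> Rs (digit a m).
Proof. by move=> ha; have [] := pickr_spec (dstate_OK m ha). Qed.

Lemma digit_unit a m : in_OK nu a -> digit a m = 0 \/ res (digit a m) != 0.
Proof. by move=> ha; have [] := pickr_spec (dstate_OK m ha). Qed.

Lemma digit_inv a m :
  a = \sum_(b < m) digit a b * p ^+ b + p ^+ m * dstate a m.
Proof.
elim: m => [|m IH]; first by rewrite big_ord0 add0r expr0 mul1r.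
rewrite big_ord_recr /= {1}IH -addrA; congr (_ + _).
rewrite /dstep /digit exprSr -mulrA [p * _]mulrC divfK //.
by rewrite [_ * p ^+ m]mulrC -mulrDr addrC subrK.
Qed.

Lemma digit_approx a m : in_OK nu a ->
  vge nu (a - \sum_(b < m) digit a b * p ^+ b) m%:Z.
Proof.
move=> ha; rewrite {1}(digit_inv a m) addrC addKr.
have := vgeM (vge_pz m%:Z) (dstate_OK m ha).
by rewrite addr0 -exprnP.
Qed.

Lemma digit0 m : digit 0 m = 0.
Proof.
have st0 : forall j, dstate 0 j = 0.
  elim=> [|j IH] //=; rewrite IH /dstep /pickr.
  by case: excluded_middle_informative => h; [rewrite subr0 mul0r|case: h; left].
rewrite /digit st0 /pickr; case: excluded_middle_informative => // h.
by case: h; left.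
Qed.

Lemma sum_single (I : eqType) (V : nmodType) (s : seq I) (P : pred I) (f : I -> V) (j : I) :
  uniq s -> (forall i, i \in s -> P i -> i = j) ->
  \sum_(i <- s | P i) f i = if (j \in s) && P j then f j else 0.
Proof.
elim: s => [|x s IH] /=; first by rewrite big_nil.
move=> /andP [xs us] h; rewrite big_cons in_cons.
have IH' := IH us (fun i hi => h i ((@mem_behead _ (x :: s) _ hi))).
case: ifP => Px.
  have xj := h x (mem_head x s) Px; subst x.
  rewrite eqxx /= Px IH' (negbTE xs) /= addr0 //.
rewrite IH'; case: eqP => [jx|] //=; subst x.
by rewrite Px (negbTE xs).
Qed.
Arguments sum_single [I V s P f] j.


Definition hE (i : 'I_n.+1) : {mpoly K[n]} :=
  if unlift ord0 i is Some j then 'X_j else 1.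

Definition Ex (h : {mpoly K[n.+1]}) : {mpoly K[n]} := mmap (@mpolyC n K) hE h.

Lemma Ex_X m : Ex 'X_[m] = 'X_[x_part m].
Proof.
rewrite /Ex mmapX /mmap1 big_ord_recl {1}/hE unlift_none expr1n mul1r.
rewrite mpolyXE_id; apply: eq_bigr => i _.
by rewrite /hE liftK /x_part mnmE.
Qed.

Lemma ExD : {morph Ex : x y / x + y}.
Proof. exact: rmorphD. Qed.
Lemma ExM : {morph Ex : x y / x * y}.
Proof. exact: rmorphM. Qed.
Lemma ExZ c h : Ex (c *: h) = c *: Ex h.
Proof. by rewrite /Ex mmapZ mul_mpolyC. Qed.
Lemma Ex_sum (I : Type) (r : seq I) (P : pred I) (F : I -> {mpoly K[n.+1]}) :
  Ex (\sum_(i <- r | P i) F i) = \sum_(i <- r | P i) Ex (F i).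
Proof. exact: (raddf_sum (mmap (@mpolyC n K) hE)). Qed.

Definition OKc (m' : nat) (q : {mpoly K[m']}) := forall m, in_OK nu q@_m.

Lemma OKc0 m' : OKc (0 : {mpoly K[m']}).
Proof. by move=> m; rewrite mcoeff0; exact: OK0. Qed.
Lemma OKcD m' (a b : {mpoly K[m']}) : OKc a -> OKc b -> OKc (a + b).
Proof. by move=> ha hb m; rewrite mcoeffD; apply: OKD. Qed.
Lemma OKcM m' (a b : {mpoly K[m']}) : OKc a -> OKc b -> OKc (a * b).
Proof.
by move=> ha hb m; rewrite mcoeffM; apply: OK_sum => i _; apply: OKM.
Qed.
Lemma OKcZ m' c (a : {mpoly K[m']}) : in_OK nu c -> OKc a -> OKc (c *: a).
Proof. by move=> hc ha m; rewrite mcoeffZ; apply: OKM. Qed.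
Lemma OKcX m' (m : 'X_{1..m'}) : OKc ('X_[m] : {mpoly K[m']}).
Proof. by move=> m0; rewrite mcoeffX; case: eqP => _; [exact: OK1|exact: OK0]. Qed.
Lemma OKc_sum m' (I : Type) (r : seq I) (P : pred I) (F : I -> {mpoly K[m']}) :
  (forall i, P i -> OKc (F i)) -> OKc (\sum_(i <- r | P i) F i).
Proof.
move=> h; elim/big_rec: _ => [|i x Pi hx]; first exact: OKc0.
exact: OKcD (h _ Pi) hx.
Qed.

Lemma Ex_expand h : Ex h = \sum_(m <- msupp h) h@_m *: 'X_[x_part m].
Proof.
rewrite {1}(mpolyE h) Ex_sum; apply: eq_bigr => m _.
by rewrite ExZ Ex_X.
Qed.

Lemma Ex_OK h : OKc h -> OKc (Ex h).
Proof.
move=> hh; rewrite Ex_expand; apply: OKc_sum => m _.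
by apply: OKcZ => //; apply: OKcX.
Qed.

Definition Rd (q : {mpoly K[n]}) : {mpoly k[n]} :=
  \sum_(m <- msupp q) res q@_m *: 'X_[m].

Lemma Rd_coef q a : (Rd q)@_a = res q@_a.
Proof.
rewrite /Rd raddf_sum /=.
rewrite (eq_bigr (fun m => if m == a then res q@_m else 0)); last first.
  by move=> m _; rewrite mcoeffZ mcoeffX; case: eqP; rewrite ?mulr1 ?mulr0.
rewrite -big_mkcond (sum_single a) ?msupp_uniq //; last by move=> i _ /eqP.
rewrite eqxx andbT; case: ifP => // /negbT /memN_msupp_eq0 ->.
by rewrite res0.
Qed.

Lemma RdD a b : OKc a -> OKc b -> Rd (a + b) = Rd a + Rd b.
Proof.
by move=> ha hb; apply/mpolyP => m; rewrite mcoeffD !Rd_coef mcoeffD resD.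
Qed.

Lemma RdM a b : OKc a -> OKc b -> Rd (a * b) = Rd a * Rd b.
Proof.
move=> ha hb; apply/mpolyP => m; rewrite Rd_coef !mcoeffM res_sum; last first.
  by move=> i _; apply: OKM.
by apply: eq_bigr => i _; rewrite resM // !Rd_coef.
Qed.

Lemma RdZX c m : in_OK nu c -> Rd (c *: 'X_[m]) = res c *: 'X_[m].
Proof.
move=> hc; apply/mpolyP => m'; rewrite Rd_coef !mcoeffZ !mcoeffX.
case: eqP => _; rewrite ?mulr1 ?mulr0 //; exact: res0.
Qed.

Lemma Rd_sum (I : Type) (r : seq I) (P : pred I) (F : I -> {mpoly K[n]}) :
  (forall i, P i -> OKc (F i)) ->
  Rd (\sum_(i <- r | P i) F i) = \sum_(i <- r | P i) Rd (F i).
Proof.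
move=> h; elim: r => [|i r IH]; first by rewrite !big_nil; apply/mpolyP => m;
  rewrite Rd_coef !mcoeff0 res0.
rewrite !big_cons; case: ifP => Pi //.
by rewrite RdD ?IH //; [exact: h|exact: OKc_sum].
Qed.

Definition phi (h : {mpoly K[n.+1]}) := Rd (Ex h).

Lemma phiD a b : OKc a -> OKc b -> phi (a + b) = phi a + phi b.
Proof. by move=> ha hb; rewrite /phi ExD RdD //; apply: Ex_OK. Qed.
Lemma phiM a b : OKc a -> OKc b -> phi (a * b) = phi a * phi b.
Proof. by move=> ha hb; rewrite /phi ExM RdM //; apply: Ex_OK. Qed.
Lemma phi_sum (I : Type) (r : seq I) (P : pred I) (F : I -> {mpoly K[n.+1]}) :
  (forall i, P i -> OKc (F i)) ->
  phi (\sum_(i <- r | P i) F i) = \sum_(i <- r | P i) phi (F i).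
Proof.
move=> h; rewrite /phi Ex_sum Rd_sum // => i Pi; exact: Ex_OK (h _ Pi).
Qed.
Lemma phiZX c m : in_OK nu c -> phi (c *: 'X_[m]) = res c *: 'X_[x_part m].
Proof. by move=> hc; rewrite /phi ExZ Ex_X RdZX. Qed.


Definition pb (P : Prop) : bool := if excluded_middle_informative P then true else false.
Lemma pbP (P : Prop) : reflect P (pb P).
Proof. by rewrite /pb; case: excluded_middle_informative => h; constructor. Qed.

Definition mk (b : nat) (a : 'X_{1..n}) : 'X_{1..n.+1} :=
  [multinom (if unlift ord0 i is Some j then a j else b) | i < n.+1].

Lemma mk0 b a : mk b a ord0 = b.
Proof. by rewrite /mk mnmE unlift_none. Qed.

Lemma x_part_mk b a : x_part (mk b a) = a.
Proof. by apply/mnmP => i; rewrite /x_part mnmE /mk mnmE liftK. Qed.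

Lemma mk_eta (m : 'X_{1..n.+1}) : mk (m ord0) (x_part m) = m.
Proof.
apply/mnmP => i; rewrite /mk mnmE; case: unliftP => [j ->|->] //.
by rewrite /x_part mnmE.
Qed.

Lemma mk_inj b a b' a' : mk b a = mk b' a' -> b = b' /\ a = a'.
Proof. by move=> h; split; [rewrite -(mk0 b a) h mk0 | rewrite -(x_part_mk b a) h x_part_mk]. Qed.

Lemma wt_ext (v : 'I_n -> R) b a : wt (ext_vec (-1) v) b a = wdot v a - b%:R.
Proof.
rewrite /wt /wdot /ext_vec unlift_none mulN1r addrC; congr (_ - _).
by apply: eq_bigr => i _; rewrite liftK.
Qed.

Section InitU.
Variables (v : 'I_n -> R) (F : pstx K n).

Definition alive (a : 'X_{1..n}) := exists b, F a b != 0.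

Definition bmin (a : 'X_{1..n}) : nat :=
  match excluded_middle_informative (alive a) with
  | left h => ex_minn h
  | right _ => 0%N
  end.

Lemma bmin_spec a : alive a -> F a (bmin a) != 0 /\ forall b, F a b != 0 -> (bmin a <= b)%N.
Proof.
rewrite /bmin; case: excluded_middle_informative => // h _.
by case: ex_minnP => m Hm Hmin; split.
Qed.

Lemma bmin_lt a b : (b < bmin a)%N -> F a b = 0.
Proof.
move=> lt; apply/eqP; apply/negP => /negP nz.
have al : alive a by exists b.
by have := (bmin_spec al).2 _ nz; rewrite leqNgt lt.
Qed.

Definition W (a : 'X_{1..n}) : R := wdot v a - (bmin a)%:R.

Local Notation u := (ext_vec (-1) v).

Lemma init_termE m : init_term u F m <->
  F (x_part m) (m ord0) != 0 /\ forall a b, F a b != 0 -> wdot v a - b%:R <= wdot v (x_part m) - (m ord0)%:R.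
Proof.
rewrite /init_term; split => -[h1 h2]; split => // a b nz; move: (h2 a b nz);
  by rewrite !wt_ext.
Qed.

Lemma it_bmin m : init_term u F m -> alive (x_part m) /\ m ord0 = bmin (x_part m).
Proof.
move/init_termE => [nz h]; have al : alive (x_part m) by exists (m ord0).
split=> //; have [nzb hmin] := bmin_spec al.
have := h _ _ nzb; rewrite lerD2l lerN2 ler_nat => le1.
by apply/eqP; rewrite eqn_leq le1 hmin.
Qed.

Lemma it_mk a : alive a ->
  (init_term u F (mk (bmin a) a) <-> forall a', alive a' -> W a' <= W a).
Proof.
move=> al; rewrite init_termE x_part_mk mk0 /W; split.
  by move=> [_ h] a' al'; apply: h; case: (bmin_spec al').
move=> h; split; first by case: (bmin_spec al).
move=> a' b nz; have al' : alive a' by exists b.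
apply: le_trans (h _ al'); rewrite lerD2l lerN2 ler_nat.
by case: (bmin_spec al') => _; apply.
Qed.

Definition Pg (a : 'X_{1..n}) : bool := pb (alive a /\ init_term u F (mk (bmin a) a)).

Definition Gexp (s : seq 'X_{1..n}) : {mpoly K[n.+1]} :=
  \sum_(a <- undup s | Pg a) F a (bmin a) *: 'X_[mk (bmin a) a].

Lemma coef_sumX (L : nzRingType) (m' : nat) (s : seq 'X_{1..m'}) (Q : pred 'X_{1..m'})
   (c : 'X_{1..m'} -> L) (al : 'X_{1..m'}) : uniq s ->
  (\sum_(m <- s | Q m) c m *: 'X_[m])@_al = if (al \in s) && Q al then c al else 0.
Proof.
move=> us; rewrite raddf_sum /=.
rewrite (eq_bigr (fun m => if m == al then c m else 0)); last first.
  by move=> m _; rewrite mcoeffZ mcoeffX; case: eqP; rewrite ?mulr1 ?mulr0.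
rewrite -big_mkcondr (sum_single al) //; last by move=> i _ /andP [_ /eqP].
by rewrite eqxx andbT.
Qed.

Lemma Gexp_coef s m : (forall a, a \notin s -> forall b, F a b = 0) ->
  (Gexp s)@_m = if pb (init_term u F m) then F (x_part m) (m ord0) else 0.
Proof.
move=> hs; rewrite /Gexp raddf_sum /=.
rewrite (eq_bigr (fun a => if mk (bmin a) a == m then F a (bmin a) else 0)); last first.
  by move=> a _; rewrite mcoeffZ mcoeffX; case: eqP; rewrite ?mulr1 ?mulr0.
rewrite -big_mkcondr (sum_single (x_part m)) ?undup_uniq //; last first.
  by move=> a _ /andP [_ /eqP <-]; rewrite x_part_mk.
case: pbP => hit.
  have [al e] := it_bmin hit.
  have ms : x_part m \in undup s.
    rewrite mem_undup; case: (boolP (x_part m \in s)) => // ns.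
    have h0 := hs _ ns (m ord0).
    by case: hit; rewrite h0 eqxx.
  rewrite ms /= -e mk_eta eqxx andbT /Pg.
  by case: pbP => // -[]; split => //; rewrite -e mk_eta.
case: ifP => //= /andP [_ /andP [/pbP [_ hit'] /eqP e]].
by case: hit; rewrite -e.
Qed.

Lemma Gexp_init s : (forall a, a \notin s -> forall b, F a b = 0) ->
  is_init_u u F (Gexp s).
Proof.
move=> hs m; rewrite Gexp_coef //; split => h; case: pbP => //.
Qed.

Lemma init_uniq g g' : is_init_u u F g -> is_init_u u F g' -> g = g'.
Proof.
move=> h h'; apply/mpolyP => m; have [h1 h2] := h m; have [h1' h2'] := h' m.
case: (classic (init_term u F m)) => hit; first by rewrite h1 // h1'.
by rewrite h2 // h2'.
Qed.

End InitU.

Lemma intr_nat (b : nat) : ((b%:Z)%:~R : R) = b%:R.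
Proof. by []. Qed.

Lemma pXn_pz (b : nat) : p ^+ b * p ^ (- b%:Z) = 1.
Proof. by rewrite exprnP -exprzDr ?unitp // subrr expr0z. Qed.

Section PiRel.
Variables (v : 'I_n -> R) (F : pstx K n) (s : seq 'X_{1..n}) (g' : {mpoly K[n]}).
Hypothesis HFs : forall a, a \notin s -> forall b, F a b = 0.
Hypothesis HFR : forall a b, Rs (F a b).
Hypothesis Hpi : pi_rel nu p F g'.

Lemma FOK a b : in_OK nu (F a b). Proof. exact: HRO. Qed.

Lemma K1 a : ~ alive F a -> g'@_a = 0.
Proof.
move=> nal; apply: vge_all0 => N; have [M hM] := Hpi a N.
have := hM M (leqnn M); rewrite big1 ?subr0 // => b _.
have -> : F a b = 0 by apply/eqP; apply/negP => /negP nz; apply: nal; exists b.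
by rewrite mul0r.
Qed.

Lemma alive_s a : alive F a -> a \in s.
Proof. by move=> [b nz]; apply/negP => /negP ns; move: nz; rewrite HFs ?eqxx. Qed.

Lemma K2 a : alive F a ->
  vge nu (g'@_a * p ^ (- (bmin F a)%:Z) - F a (bmin F a)) 1.
Proof.
move=> al; set b0 := bmin F a.
have [M0 hM] := Hpi a (b0%:Z + 1).
set m := maxn M0 b0.+1.
have h1 := hM m (leq_maxl _ _).
have lt : (b0 < m)%N by rewrite /m leq_max ltnSn orbT.
have h2 : vge nu (\sum_(b < m) F a b * p ^+ b - F a b0 * p ^+ b0) (b0%:Z + 1).
  rewrite (bigD1 (Ordinal lt)) //= addrAC subrr add0r.
  apply: vge_sum => b /= nb.
  case: (ltnP b b0) => [lb|gb].
    by rewrite bmin_lt // mul0r; apply: vge0.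
  have gb' : (b0 < b)%N by rewrite ltn_neqAle gb andbT eq_sym; apply: contra nb => /eqP e; apply/eqP/val_inj.
  have := vgeM (FOK a b) (vge_pz b%:Z); rewrite add0r -exprnP => h.
  by apply: (vge_le h); rewrite -PoszD lez_nat addn1.
have h3 : vge nu (g'@_a - F a b0 * p ^+ b0) (b0%:Z + 1).
  by have := vgeD h1 h2; rewrite addrA subrK.
have := vgeMpz (- b0%:Z) h3.
by rewrite mulrBl -mulrA pXn_pz mulr1 addrAC subrr add0r.
Qed.

Definition ee a := g'@_a * p ^ (- (bmin F a)%:Z).

Lemma ee_OK a : alive F a -> in_OK nu (ee a).
Proof.
move=> al; have := vgeD (vge_le (K2 al) ler01) (FOK a (bmin F a)).
by rewrite subrK.
Qed.

Lemma g_ee a : g'@_a = ee a * p ^+ (bmin F a).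
Proof. by rewrite /ee -mulrA [_ * p ^+ _]mulrC pXn_pz mulr1. Qed.

Lemma ee_res a : alive F a -> res (ee a) = res (F a (bmin F a)).
Proof. by move=> al; apply: res_eq; [exact: ee_OK|exact: FOK|exact: K2]. Qed.

Lemma nu_g_ge a : alive F a -> g'@_a != 0 -> (bmin F a)%:Z <= nu g'@_a.
Proof.
move=> al nz; apply: vge_nu => //; rewrite g_ee.
by have := vgeM (ee_OK al) (vge_pz (bmin F a)%:Z); rewrite add0r -exprnP.
Qed.

Lemma case_unit a : alive F a -> res (F a (bmin F a)) != 0 ->
  [/\ g'@_a != 0, nu g'@_a = (bmin F a)%:Z &
      res (g'@_a * p ^ (- nu g'@_a)) = res (F a (bmin F a))].
Proof.
move=> al hr; rewrite -ee_res // in hr.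
have [e0 ne] := res_unit (ee_OK al) hr.
have g0 : g'@_a != 0 by rewrite g_ee mulf_neq0 // expf_neq0.
have ng : nu g'@_a = (bmin F a)%:Z.
  by rewrite g_ee nuM ?expf_neq0 // ne nuXn add0r.
by split => //; rewrite ng -ee_res.
Qed.

Lemma case_nonunit a : alive F a -> res (F a (bmin F a)) = 0 ->
  g'@_a != 0 -> (bmin F a)%:Z + 1 <= nu g'@_a.
Proof.
move=> al hr nz; apply: vge_nu => //; rewrite g_ee.
rewrite -ee_res // in hr; have := (res_ker (ee_OK al)).1 hr => h.
by have := vgeM h (vge_pz (bmin F a)%:Z); rewrite -exprnP addrC.
Qed.


Variable g : {mpoly K[n.+1]}.
Hypothesis Hinit : is_init_u (ext_vec (-1) v) F g.

Lemma phiG_coef al : (phi (Gexp v F s))@_al =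
  if (al \in undup s) && Pg v F al then res (F al (bmin F al)) else 0.
Proof.
rewrite /Gexp phi_sum; last first.
  by move=> a _; apply: OKcZ; [exact: FOK|exact: OKcX].
rewrite (eq_bigr (fun a => res (F a (bmin F a)) *: 'X_[a])); last first.
  by move=> a _; rewrite phiZX ?x_part_mk //; exact: FOK.
by rewrite coef_sumX // undup_uniq.
Qed.

Definition wg a : R := wdot v a - (nu g'@_a)%:~R.

Lemma wg_le_W a : alive F a -> g'@_a != 0 -> wg a <= W v F a.
Proof.
move=> al nz; rewrite /wg /W lerD2l lerN2 -intr_nat ler_int.
exact: nu_g_ge.
Qed.

Lemma in_nu_coef al : (in_nu nu res p v g')@_al =
  if (al \in msupp g') && all (fun m' => wg m' <= wg al) (msupp g')
  then res (g'@_al * p ^ (- nu g'@_al)) else 0.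
Proof. by rewrite /in_nu coef_sumX // msupp_uniq. Qed.

Lemma b_dich : phi g = 0 \/ phi g = in_nu nu res p v g'.
Proof.
rewrite (init_uniq Hinit (Gexp_init v HFs)).
case: (classic (exists a, (a \in undup s) && Pg v F a /\ res (F a (bmin F a)) != 0));
  last first.
  move=> hno; left; apply/mpolyP => al; rewrite phiG_coef mcoeff0.
  case: ifP => // h; case: (boolP (res (F al (bmin F al)) == 0)) => [/eqP //|hr].
  by case: hno; exists al.
move=> [a0 [/andP [ha0 /pbP [al0 hit0]] hr0]]; right.
set M := W v F a0.
have F1 : forall a', alive F a' -> W v F a' <= M by exact: (it_mk v al0).1 hit0.
have F2 : forall a, alive F a -> Pg v F a = (M <= W v F a).
  move=> a al; apply/pbP/idP => [[_ /(it_mk v al) h]|h]; first exact: h.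
  by split => //; apply/(it_mk v al) => a' al'; apply: le_trans (F1 _ al') h.
have [g0 ng0 _] := case_unit al0 hr0.
have F3 : wg a0 = M by rewrite /wg /M /W ng0.
have a0s : a0 \in msupp g' by rewrite mcoeff_msupp.
have F4 : forall a, a \in msupp g' -> wg a <= M.
  move=> a; rewrite mcoeff_msupp => nz.
  have al : alive F a by case: (classic (alive F a)) => // /K1 h; move: nz; rewrite h eqxx.
  by apply: le_trans (wg_le_W al nz) (F1 _ al).
have maxwE : forall a, a \in msupp g' ->
    all (fun m' => wg m' <= wg a) (msupp g') = (M <= wg a).
  move=> a ha; apply/allP/idP => [h|h m' hm']; first by rewrite -F3; apply: h.
  exact: le_trans (F4 _ hm') h.
apply/mpolyP => al; rewrite phiG_coef in_nu_coef.
case: (boolP ((al \in undup s) && Pg v F al)) => [/andP [has hP]|hn].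
  have al1 : alive F al by move: hP => /pbP [].
  have WM : W v F al = M by apply/eqP; rewrite eq_le F1 // -F2.
  case: (boolP (res (F al (bmin F al)) == 0)) => [/eqP hr|hr].
    rewrite hr; case: ifP => // /andP [hs]; rewrite maxwE //.
    move: hs; rewrite mcoeff_msupp => nz.
    have h0 := case_nonunit al1 hr nz.
    have h : (((bmin F al)%:Z + 1)%:~R : R) <= (nu g'@_al)%:~R by rewrite ler_int.
    rewrite intrD intr_nat in h.
    have : wg al <= M - 1 by rewrite -WM /wg /W; lra.
    move=> h1 h2; exfalso; have := le_trans h2 h1; lra.
  have [nz ng hres] := case_unit al1 hr.
  have hs : al \in msupp g' by rewrite mcoeff_msupp.
  rewrite hs maxwE // hres; case: ifP => // /negbT; rewrite -WM /wg /W ng.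
  by rewrite lexx.
case: ifP => // /andP [hs]; rewrite maxwE // => hM.
move: (hs); rewrite mcoeff_msupp => nz.
have al1 : alive F al by case: (classic (alive F al)) => // /K1 h; move: nz; rewrite h eqxx.
have : M <= W v F al by apply: le_trans hM (wg_le_W al1 nz).
rewrite -F2 // => hP.
by move: hn; rewrite hP mem_undup alive_s.
Qed.

End PiRel.

Lemma seq_argmax (T : eqType) (L : seq T) (f : T -> R) x :
  x \in L -> exists y, y \in L /\ forall z, z \in L -> f z <= f y.
Proof.
elim: L x => [//|a L IH] x _.
case: L IH => [|b L] IH.
  by exists a; split; [exact: mem_head|move=> z; rewrite mem_seq1 => /eqP ->].
have [y [yL hy]] := IH b (mem_head _ _).
case: (lerP (f a) (f y)) => h.
  exists y; split; first by rewrite in_cons yL orbT.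
  by move=> z; rewrite in_cons => /orP [/eqP ->|/hy].
exists a; split; first exact: mem_head.
move=> z; rewrite in_cons => /orP [/eqP ->|/hy h2] //.
exact: le_trans h2 (ltW h).
Qed.

Lemma in_nu_scale (v : 'I_n -> R) (f : {mpoly K[n]}) (j : nat) :
  in_nu nu res p v ((p ^+ j) *: f) = in_nu nu res p v f.
Proof.
have c0 : p ^+ j != 0 by rewrite expf_neq0.
have memE : msupp (p ^+ j *: f) =i msupp f by apply: perm_mem; apply: msuppZ.
have nuE : forall m, m \in msupp f -> nu (p ^+ j *: f)@_m = j%:Z + nu f@_m.
  move=> m; rewrite mcoeff_msupp => nz; rewrite mcoeffZ nuM // nuXn //.
have wgE : forall m, m \in msupp f ->
    wg v (p ^+ j *: f) m = wg v f m - j%:R.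
  move=> m hm; rewrite /wg nuE // intrD intr_nat; lra.
apply/mpolyP => al; rewrite !in_nu_coef memE.
case: (boolP (al \in msupp f)) => //= hal.
have -> : all (fun m' => wg v (p ^+ j *: f) m' <= wg v (p ^+ j *: f) al)
   (msupp (p ^+ j *: f)) = all (fun m' => wg v f m' <= wg v f al) (msupp f).
  rewrite (eq_all_r memE); apply: eq_in_all => m hm /=.
  by rewrite !wgE // lerD2r.
case: ifP => // _; rewrite nuE // mcoeffZ; congr (res _).
rewrite [p ^+ j * _]mulrC -mulrA exprnP -exprzDr ?unitp //.
by rewrite opprD addrA subrr add0r.
Qed.

Lemma in_nu0 (v : 'I_n -> R) : in_nu nu res p v 0 = 0.
Proof. by rewrite /in_nu msupp0 big_nil. Qed.

Section APrime.
Variables (v : 'I_n -> R) (I : {mpoly K[n]} -> Prop).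
Hypothesis HIid : is_ideal I.

Lemma a_prime f : I f -> f != 0 ->
  exists F g, pi_preimage nu Rs p I F /\ is_init_u (ext_vec (-1) v) F g /\
    phi g = in_nu nu res p v f.
Proof.
move=> If f0.
set k0 := (\sum_(m <- msupp f) `|nu f@_m|)%N.
set f1 := p ^+ k0 *: f.
have If1 : I f1 by rewrite /f1 -mul_mpolyC; apply: (proj2 (proj2 HIid)).
have f1OK : forall m, in_OK nu f1@_m.
  move=> m; case: (boolP (m \in msupp f)) => hm; last first.
    by rewrite /f1 mcoeffZ (memN_msupp_eq0 hm) mulr0; exact: OK0.
  move: (hm); rewrite mcoeff_msupp => nz.
  right; rewrite /f1 mcoeffZ nuM ?expf_neq0 // nuXn.
  have h1 : (`|nu f@_m| <= k0)%N.
    by rewrite /k0 (bigD1_seq m) //= ?msupp_uniq // leq_addr.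
  have h2 : - nu f@_m <= `|nu f@_m|%N%:Z.
    by rewrite abszE -normrN ler_norm.
  rewrite -lez_nat in h1; rewrite -subr_ge0 subr0 -[X in _ <= _ + X]opprK subr_ge0.
  exact: le_trans h2 h1.
pose F : pstx K n := fun a b => digit (f1@_a) b.
have HFs : forall a, a \notin msupp f1 -> forall b, F a b = 0.
  by move=> a ha b; rewrite /F (memN_msupp_eq0 ha) digit0.
have HFR : forall a b, Rs (F a b) by move=> a b; apply: digit_Rs.
have Hpi : pi_rel nu p F f1.
  move=> a N; exists `|N|%N => m hm.
  apply: vge_le (digit_approx m (f1OK a)) _.
  apply: le_trans (lez_abs N) _; rewrite lez_nat //.
have HF : pi_preimage nu Rs p I F.
  by split; [split=> //; exists (msupp f1)|exists f1].
exists F, (Gexp v F (msupp f1)); split=> //; split; first exact: Gexp_init.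
have Hinit := Gexp_init v HFs.
have [h0|->] := b_dich HFs HFR Hpi Hinit; last by rewrite in_nu_scale.
exfalso.
have f10 : f1 != 0 by rewrite /f1 scaler_eq0 negb_or expf_neq0.
have [a1 ha1] : exists a, a \in msupp f1.
  by case: (msupp f1) (msupp_eq0 f1) f10 => [/= <-|a ? _ _]; [rewrite eqxx|exists a; exact: mem_head].
have al1 : alive F a1.
  case: (classic (alive F a1)) => // /(K1 Hpi) h.
  by move: ha1; rewrite mcoeff_msupp h eqxx.
have hL : a1 \in [seq a <- msupp f1 | pb (alive F a)].
  by rewrite mem_filter; apply/andP; split => //; exact/pbP.
have [a2 [ha2 hmax]] := seq_argmax (W v F) hL.
move: ha2; rewrite mem_filter => /andP [/pbP al2 hs2].
have hit : init_term (ext_vec (-1) v) F (mk (bmin F a2) a2).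
  apply/(it_mk v al2) => a' al'; apply: hmax; rewrite mem_filter.
  apply/andP; split; [exact/pbP | idtac]. exact: (@alive_s F (msupp f1) HFs a' al').
have hr : res (F a2 (bmin F a2)) != 0.
  have [nz _] := bmin_spec al2.
  by case: (digit_unit (bmin F a2) (f1OK a2)) => // h; move: nz; rewrite /F h eqxx.
have := phiG_coef v (msupp f1) HFR a2; rewrite h0 mcoeff0.
rewrite mem_undup hs2 /= /Pg; case: pbP => [_|[]]; last by split.
by move=> /esym /eqP; rewrite (negbTE hr).
Qed.

End APrime.

Section IdealK.
Variable (S : {mpoly k[n]} -> Prop).
Local Notation IG := (ideal_gen (fun _ : {mpoly k[n]} => True) S).

Lemma ig0 : IG 0.
Proof. by exists 0%N, (fun _ => 0), (fun _ => 0); split => //; rewrite big_ord0. Qed.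

Lemma ig_gen x : S x -> IG x.
Proof.
by move=> hx; exists 1%N, (fun _ => 1), (fun _ => x); split => [i _|]; rewrite ?big_ord1 ?mul1r.
Qed.

Lemma igD x y : IG x -> IG y -> IG (x + y).
Proof.
move=> [N1 [h1 [s1 [H1 ->]]]] [N2 [h2 [s2 [H2 ->]]]].
exists (N1 + N2)%N, (fun i => if (i < N1)%N then h1 i else h2 (i - N1)%N),
  (fun i => if (i < N1)%N then s1 i else s2 (i - N1)%N); split.
  move=> i hi; case: ifP => hl; first by apply: H1.
  apply: H2; rewrite ltn_subLR //; rewrite leqNgt hl //.
rewrite big_split_ord /=; congr (_ + _); apply: eq_bigr => i _ /=.
  by rewrite ltn_ord.
by rewrite ltnNge leq_addr /= addKn.
Qed.

Lemma igM c x : IG x -> IG (c * x).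
Proof.
move=> [N [h [s [H ->]]]]; exists N, (fun i => c * h i), s; split => //.
by rewrite mulr_sumr; apply: eq_bigr => i _; rewrite mulrA.
Qed.

Lemma ig_sum N (f : nat -> {mpoly k[n]}) :
  (forall i, (i < N)%N -> IG (f i)) -> IG (\sum_(i < N) f i).
Proof.
elim: N => [|N IH] hf; first by rewrite big_ord0; apply: ig0.
rewrite big_ord_recr /=; apply: igD; last exact: hf.
by apply: IH => i hi; apply: hf; apply: ltn_trans hi _.
Qed.

End IdealK.

Lemma coeffs_in_OK (h : {mpoly K[n.+1]}) : coeffs_in Rs h -> OKc h.
Proof. by move=> hh m; apply: HRO. Qed.

Lemma init_OKc (u : 'I_n.+1 -> R) (F : pstx K n) (g : {mpoly K[n.+1]}) : (forall a b, Rs (F a b)) -> is_init_u u F g -> OKc g.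
Proof.
move=> HFR hi m; have [h1 h2] := hi m.
case: (classic (init_term u F m)) => hit; first by rewrite h1 //; apply: HRO.
by rewrite h2 //; exact: OK0.
Qed.

Lemma coeffs_in1 : coeffs_in Rs (1 : {mpoly K[n.+1]}).
Proof.
move=> m; rewrite mcoeff1; case: eqP => _ /=; first by case: HRsub => _ [].
by case: HRsub.
Qed.

Section Incl.
Variables (I : {mpoly K[n]} -> Prop) (v w : 'I_n -> R).
Hypothesis HIid : is_ideal I.
Local Notation J := (pi_preimage nu Rs p I).
Hypothesis Hsame : same_ideal (in_u_ideal Rs (ext_vec (-1) v) J)
                              (in_u_ideal Rs (ext_vec (-1) w) J).

Lemma phi_init_in F g : J F -> is_init_u (ext_vec (-1) w) F g ->
  in_nu_ideal nu res p w I (phi g).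
Proof.
move=> [[HFR [s HFs]] [g'' [Hpi Ig]]] Hinit.
have [->|->] := b_dich HFs HFR Hpi Hinit; first exact: ig0.
by apply: ig_gen; exists g''.
Qed.

Lemma incl x : in_nu_ideal nu res p v I x -> in_nu_ideal nu res p w I x.
Proof.
move=> [N [h [s [H ->]]]]; apply: (ig_sum (f := fun j => h j * s j)) => i hi; apply: igM.
have [_ [f [If ->]]] := H i hi.
have [->|f0] := eqVneq f 0; first by rewrite in_nu0; apply: ig0.
have [F [g [JF [Hinit <-]]]] := a_prime v HIid If f0.
have : in_u_ideal Rs (ext_vec (-1) v) J g.
  exists 1%N, (fun _ => 1), (fun _ => g); split; last by rewrite big_ord1 mul1r.
  by move=> j _; split; [exact: coeffs_in1| exists F].
move/Hsame => [N' [H' [G' [HG ->]]]].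
rewrite phi_sum; last first.
  move=> j _; have [hH [F' [JF' hi']]] := HG j (ltn_ord j).
  by apply: OKcM; [exact: coeffs_in_OK| apply: init_OKc hi'; case: JF' => -[]].
apply: (ig_sum (f := fun j => phi (H' j * G' j))) => j hj; have [hH [F' [JF' hi']]] := HG j hj.
rewrite phiM; first by apply: igM; apply: phi_init_in hi'.
  exact: coeffs_in_OK.
by apply: init_OKc hi'; case: JF' => -[].
Qed.

End Incl.

Lemma ideal_gen_ext (P : comPzRingType) (A S1 S2 : P -> Prop) :
  (forall x, S1 x <-> S2 x) -> forall x, ideal_gen A S1 x -> ideal_gen A S2 x.
Proof.
move=> hS x [N [h [s [H ->]]]]; exists N, h, s; split => // i hi.
by have [? /hS ?] := H i hi.
Qed.

Section Scale.
Variables (s' : 'I_n.+1 -> R).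
Hypothesis Hs0 : s' ord0 < 0.
Local Notation c := (- s' ord0).
Definition vsc : 'I_n -> R := fun j => s' (lift ord0 j) / c.

Lemma c_gt0 : 0 < c. Proof. by rewrite oppr_gt0. Qed.

Lemma wt_sc b a : wt (ext_vec (-1) vsc) b a = wt s' b a / c.
Proof.
have c0 : c != 0 by rewrite gt_eqF // c_gt0.
rewrite /wt /ext_vec unlift_none mulrDl; congr (_ + _).
  by field; rewrite ?oppr_eq0 lt_eqF.
rewrite mulr_suml; apply: eq_bigr => i _; rewrite liftK /vsc; ring.
Qed.

Lemma init_term_sc (F : pstx K n) m : init_term (ext_vec (-1) vsc) F m <-> init_term s' F m.
Proof.
have ci : 0 < c^-1 by rewrite invr_gt0 c_gt0.
rewrite /init_term; split => -[h1 h2]; split => // a b nz; have := h2 a b nz;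
  rewrite !wt_sc ler_pM2r //.
Qed.

Lemma init_u_sc (F : pstx K n) g : is_init_u (ext_vec (-1) vsc) F g <-> is_init_u s' F g.
Proof.
split => h m; have [h1 h2] := h m; split => hit.
- by apply: h1; apply/init_term_sc.
- by apply: h2; move/init_term_sc.
- by apply: h1; apply/init_term_sc.
- by apply: h2; move/init_term_sc.
Qed.

Lemma in_u_sc (J : pstx K n -> Prop) x : in_u_ideal Rs (ext_vec (-1) vsc) J x <-> in_u_ideal Rs s' J x.
Proof.
split; apply: ideal_gen_ext => g; split => -[F [JF hF]]; exists F; split => //;
  by apply/init_u_sc.
Qed.

End Scale.

Lemma main_sec (I : {mpoly K[n]} -> Prop) (HIid : is_ideal I) (w v : 'I_n -> R) :
  groebner_cone Rs (pi_preimage nu Rs p I) (ext_vec (-1) w) (ext_vec (-1) v) ->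
  groebner_polytope nu res p I w v.
Proof.
move=> hc e e0.
set B := \sum_(i < n) `|v i|.
have B0 : 0 <= B by apply: sumr_ge0 => i _.
set D := 4 * (1 + B) + 2 * e.
have D0 : 0 < D by rewrite /D; lra.
set dl := e / D.
have dl0 : 0 < dl by rewrite /dl divr_gt0.
have hdD : dl * D = e by rewrite /dl divfK // gt_eqF.
have [s' [[s0 hsame] hcl]] := hc dl dl0.
exists (vsc s'); split.
  move=> x; split => hx.
    apply: (incl HIid _ hx) => y; rewrite in_u_sc //; exact: hsame.
  apply: (incl HIid _ hx) => y; rewrite in_u_sc //; split => h; apply/hsame => //.
move=> j.
have h0 := hcl ord0; rewrite /ext_vec unlift_none in h0.
have hj := hcl (lift ord0 j); rewrite /ext_vec liftK in hj.
have vB : `|v j| <= B.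
  by rewrite /B (bigD1 j) //= lerDl; apply: sumr_ge0.
set c := - s' ord0.
set t := vsc s' j - v j.
set d := s' (lift ord0 j) - v j.
set d0 := s' ord0 - -1.
have c0 : c != 0 by rewrite /c oppr_eq0 lt_eqF.
have ct : c * t = d + d0 * v j.
  by rewrite /t /vsc /d /d0 /c; field; rewrite lt_eqF.
have hct : `|c * t| <= dl + dl * B.
  rewrite ct; apply: le_trans (ler_normD _ _) _; apply: lerD; first exact: ltW.
  by rewrite normrM; apply: ler_pM => //; apply: ltW.
have hc2 : 1 / 2 <= c.
  move: h0; rewrite ltr_norml => /andP [h1 h2].
  have hx : 0 <= dl * (4 * (1 + B)) by apply: mulr_ge0; lra.
  have : dl * (2 * e) <= e by move: hdD; rewrite /D mulrDr; lra.
  rewrite /c => h3; nra.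
rewrite normrM (gtr0_norm (lt_le_trans _ hc2)) ?divr_gt0 // in hct.
have hy : 0 <= dl * (2 * e) by apply: mulr_ge0; lra.
have : dl * (4 * (1 + B)) <= e by move: hdD; rewrite /D mulrDr; lra.
have := normr_ge0 t.
nra.
Qed.

End Main.

Theorem corollary3p5 (K k : fieldType) (R : realType) (n : nat)
  (nu : K -> int) (p : K) (res : K -> k) (Rs : K -> Prop)
  (Hnu : is_discrete_valuation nu) (Hp0 : p != 0) (Hp : nu p = 1)
  (Hcompl : val_complete nu) (Hres : is_residue_map nu res)
  (HRsub : is_subring Rs) (HRO : forall x, Rs x -> in_OK nu x)
  (HRdense : is_dense_in_OK nu Rs) (HRnoeth : is_noetherian Rs) (HpR : Rs p)
  (I : {mpoly K[n]} -> Prop) (HI : is_homog_ideal I) (w : 'I_n -> R) :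
  forall v : 'I_n -> R,
    groebner_cone Rs (pi_preimage nu Rs p I) (ext_vec (-1) w) (ext_vec (-1) v) ->
    groebner_polytope nu res p I w v.
Proof.
move=> v hc.
exact: (main_sec Hnu Hp0 Hp Hres HRsub HRO HRdense (proj1 HI) hc).
Qed.
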